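(* Let $R$ be an associative ring with identity, and let $a,b,c,d\in R$ satisfy $bdb=bac$ and $dbd=acd$. If $ac\in R^{D}$, then $bd\in R^{D}$, $(bd)^{D}=b\big((ac)^{D}\big)^2d$, and $i(bd)\le i(ac)+1$.
   Context: For $x\in R$, $\mathrm{comm}(x)=\{y\in R : xy=yx\}$ and $\mathrm{comm}^2(x)=\{y\in R : yz=zy \text{ for all } z\in\mathrm{comm}(x)\}$. An element $x\in R$ has a Drazin inverse if there is $y\in R$ with $y=yxy$, $y\in\mathrm{comm}^2(x)$ and $x-x^2y$ nilpotent; such $y$ is unique and denoted $x^D$; $R^D$ is the set of such $x$. The (Drazin) index $i(x)$ is the smallest $k\ge 0$ with $x^k=x^{k+1}x^D$. *)

(* Defs.v *)
From HB Require Import structures.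
From mathcomp Require Import all_boot all_order all_algebra.
Set Implicit Arguments. Unset Strict Implicit. Unset Printing Implicit Defensive.
Import GRing.Theory.
Local Open Scope ring_scope.

Definition commut (R : pzRingType) (x y : R) : Prop := x * y = y * x.

Definition commut2 (R : pzRingType) (x y : R) : Prop :=
  forall z : R, commut x z -> y * z = z * y.

Definition nilpotent (R : pzRingType) (x : R) : Prop :=
  exists n : nat, x ^+ n = 0.

Definition is_drazin_inv (R : pzRingType) (x y : R) : Prop :=
  [/\ y = y * x * y, commut2 x y & nilpotent (x - x ^+ 2 * y)].

Definition has_drazin (R : pzRingType) (x : R) : Prop :=
  exists y, is_drazin_inv x y.

Definition drazin_index (R : pzRingType) (x : R) (k : nat) : Prop :=
  exists y, [/\ is_drazin_inv x y, x ^+ k = x ^+ k.+1 * y &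
    forall j : nat, (j < k)%N -> x ^+ j <> x ^+ j.+1 * y].

(* Main.v *)
Require Import Defs.
From HB Require Import structures.
From mathcomp Require Import all_boot all_order all_algebra.
Import GRing.Theory.
Local Open Scope ring_scope.

Section Aux.
Variable R : pzRingType.

Lemma idem_pow (p : R) m : p * p = p -> p ^+ m.+1 = p.
Proof. by move=> hp; elim: m => [|m IH]; rewrite ?expr1 // exprS IH. Qed.

Lemma comm_pow_l (x z : R) n : x * z = z * x -> x ^+ n * z = z * x ^+ n.
Proof. by move=> h; apply/esym/commrX. Qed.
Arguments comm_pow_l {x z} n.

Lemma drazin_of (x w : R) n : w * x = x * w -> w = w * x * w ->
  x ^+ n = x ^+ n.+1 * w -> is_drazin_inv x w.
Proof.
move=> cwx hw hn.
have cxw : GRing.comm x w by [].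
have ww : w = w * w * x by rewrite {1}hw -mulrA -cwx mulrA.
have wpow : forall m, w = w ^+ m.+1 * x ^+ m.
  elim=> [|m IH]; first by rewrite expr1 expr0 mulr1.
  rewrite {1}IH [x ^+ m.+1]exprS [w ^+ m.+2]exprSr [w ^+ m.+1]exprSr !mulrA.
  by rewrite -(mulrA (w ^+ m) w w) -(mulrA (w ^+ m) (w * w) x) -ww.
have wpow' : forall m, w = x ^+ m * w ^+ m.+1.
  by move=> m; rewrite {1}(wpow m); apply/esym/commrX/commr_sym/commrX.
have xn' : x ^+ n = w * x ^+ n.+1.
  by rewrite {1}hn; apply/commr_sym/commrX/commr_sym.
have wx : w ^+ n.+1 * x ^+ n.+1 = w * x by rewrite [x ^+ n.+1]exprSr mulrA -wpow.
split=> //.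
- move=> z hz.
  have e1 : w * z = w * x * z * w.
    rewrite {1}(wpow n) -mulrA (comm_pow_l _ hz) {1}hn.
    by rewrite (mulrA z) -(comm_pow_l _ hz) !mulrA wx.
  have e2 : z * w = w * x * z * w.
    rewrite {1}(wpow' n) mulrA. rewrite -(comm_pow_l n hz) {1}xn' exprS.
    rewrite -!mulrA; congr (_ * (_ * _)); rewrite !mulrA (comm_pow_l n hz).
    by rewrite -!mulrA -wpow'.
  by rewrite e1 e2.
- exists n.+1.
  have -> : x - x ^+ 2 * w = x * (1 - x * w) by rewrite mulrBr mulr1 ?expr2 mulrA.
  rewrite exprMn_comm; last first.
    by apply: commrB; [apply: commr1 | apply: commrM; [apply: commr_refl|]].
  rewrite (idem_pow (1 - x * w)); last by rewrite mulrBr mulr1 mulrBl mul1r -mulrA (mulrA w) -hw subrr subr0.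
  by rewrite mulrBr mulr1 mulrA -exprSr [x ^+ n.+1]exprSr hn -mulrA cwx mulrA -exprSr subrr.
Qed.

Lemma drazin_props (x w : R) : is_drazin_inv x w ->
  [/\ w * x = x * w, w = w * x * w & exists n, x ^+ n = x ^+ n.+1 * w].
Proof.
case=> hw hc [m hm].
have cwx : w * x = x * w by apply: hc.
split=> //; exists m.+1.
have cxw : GRing.comm x w by [].
move: hm.
have -> : x - x ^+ 2 * w = x * (1 - x * w) by rewrite mulrBr mulr1 ?expr2 mulrA.
move=> hm.
have : (x * (1 - x * w)) ^+ m.+1 = 0 by rewrite exprSr hm mul0r.
rewrite exprMn_comm; last first.
  by apply: commrB; [apply: commr1 | apply: commrM; [apply: commr_refl|]].
rewrite (idem_pow (1 - x * w)); last by rewrite mulrBr mulr1 mulrBl mul1r -mulrA (mulrA w) -hw subrr subr0.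
rewrite mulrBr mulr1 mulrA -exprSr => /eqP; rewrite subr_eq0 => /eqP.
by rewrite [x ^+ m.+2]exprSr.
Qed.

End Aux.
Arguments drazin_props {R x w}.
Arguments drazin_of {R x w} n.

Lemma main_aux (R : pzRingType) (a b c d : R)
  (h1 : b * d * b = b * a * c) (h2 : d * b * d = a * c * d) (y : R) :
  is_drazin_inv (a * c) y ->
  is_drazin_inv (b * d) (b * (y ^+ 2) * d) /\
  (forall n, (a * c) ^+ n = (a * c) ^+ n.+1 * y ->
    (b * d) ^+ n.+1 = (b * d) ^+ n.+2 * (b * (y ^+ 2) * d)).
Proof.
move=> hy0; have [cyx hy [n hn]] := drazin_props hy0.
case: hy0 => _ hc _.
set x := a * c in cyx hy hn hc h2 *.
have h1' : b * d * b = b * x by rewrite h1 mulrA.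
have cdb : y * (d * b) = d * b * y.
  apply: hc; rewrite /commut /x.
  transitivity (d * (b * d * b)); last by rewrite h1 !mulrA.
  by rewrite mulrA -h2 !mulrA.
have xyy : x * y * y = y by rewrite -cyx -hy.
have yyx : y * y * x = y by rewrite -mulrA cyx mulrA -hy.
set w := b * y ^+ 2 * d.
have Bw : b * d * w = b * y * d.
  by rewrite /w !mulrA h1' -(mulrA b x y) -(mulrA b (x * y) y) xyy.
have wB : w * (b * d) = b * y * d.
  rewrite /w !mulrA -(mulrA _ d b) -(mulrA _ (d * b) d) h2 mulrA.
  by rewrite -(mulrA b y y) -(mulrA b (y * y) x) yyx.
have wBw : w = w * (b * d) * w.
  rewrite wB /w.
  have -> : b * y * d * (b * y ^+ 2 * d) = b * (y * (d * b)) * y * y * d by rewrite !mulrA.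
  rewrite cdb !mulrA h1' -(mulrA b x y) -(mulrA b (x * y) y) xyy.
  by [].
have Bpow : forall m, (b * d) ^+ m.+1 = b * x ^+ m * d.
  elim=> [|m IH]; first by rewrite expr1 expr0 mulr1.
  rewrite exprSr IH -!mulrA (mulrA d b d) h2 /x.
  by rewrite exprSr !mulrA.
have key : forall m, x ^+ m = x ^+ m.+1 * y ->
    (b * d) ^+ m.+1 = (b * d) ^+ m.+2 * w.
  move=> m hm.
  rewrite [(b * d) ^+ m.+2]exprSr -(mulrA _ (b * d) w) Bw !Bpow -!mulrA.
  rewrite (mulrA b y d) (mulrA d (b * y) d) (mulrA d b y) -cdb -(mulrA y (d * b) d) h2.
  by rewrite (mulrA y x d) cyx (mulrA (x ^+ m) (x * y) d) (mulrA (x ^+ m) x y) -exprSr -hm.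
split=> //.
apply: (drazin_of n.+1) => //.
  by rewrite wB -Bw.
exact: key.
Qed.

Arguments main_aux {R a b c d} h1 h2 {y}.

Theorem theorem3p4 (R : pzRingType) (a b c d : R)
  (h1 : b * d * b = b * a * c) (h2 : d * b * d = a * c * d)
  (hD : has_drazin (a * c)) :
  has_drazin (b * d) /\
  (forall y : R, is_drazin_inv (a * c) y ->
     is_drazin_inv (b * d) (b * (y ^+ 2) * d)) /\
  (forall k : nat, drazin_index (a * c) k ->
     exists2 m : nat, drazin_index (b * d) m & (m <= k.+1)%N).
Proof.
split; first by case: hD => y hy; exists (b * y ^+ 2 * d); case: (main_aux h1 h2 hy).
split; first by move=> y hy; case: (main_aux h1 h2 hy).
move=> k [y [hy hk _]].
have [hw hkey] := main_aux h1 h2 hy.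
set w := b * y ^+ 2 * d in hw hkey.
have exP : exists j, (b * d) ^+ j == (b * d) ^+ j.+1 * w.
  by exists k.+1; rewrite (hkey k hk).
case: (ex_minnP exP) => m /eqP Pm minm.
exists m; last by apply: minm; rewrite (hkey k hk).
exists w; split=> // j hj hPj.
by have := minm j (introT eqP hPj); rewrite leqNgt hj.
Qed.
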